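(* For any probability distribution $P_{XY}$ on finite $\mathcal X\times\mathcal Y$, $\lim_{\alpha\to1^-}U_\alpha(X;Y)=U(X;Y)$ and $\lim_{\alpha\to1^+}U_\alpha(X;Y)=U(X;Y)$.
   Context: $D(P\|Q)=\sum P\log(P/Q)$ ($0\log(0/q)=0$; $+\infty$ if $P\not\ll Q$). For $\alpha\in(0,1)\cup(1,\infty)$, $D_\alpha(P\|Q)=\frac1{\alpha-1}\log\sum_{x:P(x)>0}P(x)^\alpha Q(x)^{1-\alpha}$ ($+\infty$ if $\alpha>1$ and $P\not\ll Q$). With $P_X$ the $X$-marginal: $U(X;Y)=\min_{Q_Y}D(P_X\times Q_Y\|P_{XY})$ and the Rényi umlaut information is $U_\alpha(X;Y)=\min_{Q_Y}D_\alpha(P_X\times Q_Y\|P_{XY})$. *)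

(* Defs.v *)
From HB Require Import structures.
From mathcomp Require Import all_boot all_order all_algebra.
From mathcomp Require Import all_classical all_reals all_analysis.
Set Implicit Arguments. Unset Strict Implicit. Unset Printing Implicit Defensive.
Import Order.TTheory GRing.Theory Num.Theory.
Local Open Scope classical_set_scope.
Local Open Scope ring_scope.

Section Info.
Variable R : realType.

Definition is_dist (T : finType) (P : T -> R) : Prop :=
  (forall t, 0 <= P t) /\ \sum_(t : T) P t = 1.

Definition abs_cont (T : finType) (P Q : T -> R) : Prop :=
  forall t, 0 < P t -> 0 < Q t.

(* KL divergence, natural log, 0 log(0/q) = 0, +oo if not P << Q *)
Definition KL (T : finType) (P Q : T -> R) : \bar R :=
  if `[< abs_cont P Q >] then
    (\sum_(t : T | 0 < P t) P t * ln (P t / Q t))%:E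
  else +oo%E.

(* Renyi divergence of order a (a in (0,1) U (1,oo)) *)
Definition renyi_sum (T : finType) (a : R) (P Q : T -> R) : R :=
  \sum_(t : T | 0 < P t) P t `^ a * Q t `^ (1 - a).

Definition renyi (T : finType) (a : R) (P Q : T -> R) : \bar R :=
  if (1 < a) && ~~ `[< abs_cont P Q >] then +oo%E
  else if renyi_sum a P Q == 0 then +oo%E  (* a < 1, disjoint supports: log 0 / (a-1) = +oo *)
  else (ln (renyi_sum a P Q) / (a - 1))%:E.

Definition margX (X Y : finType) (P : X * Y -> R) : X -> R :=
  fun x => \sum_(y : Y) P (x, y).

Definition prod_dist (X Y : finType) (PX : X -> R) (QY : Y -> R) : X * Y -> R :=
  fun p => PX p.1 * QY p.2.

(* umlaut information: min over Q_Y (taken as the infimum, which is attained) *)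
Definition umlaut (X Y : finType) (P : X * Y -> R) : \bar R :=
  ereal_inf [set KL (prod_dist (margX P) Q) P | Q in [set Q : Y -> R | is_dist Q]].

Definition renyi_umlaut (X Y : finType) (a : R) (P : X * Y -> R) : \bar R :=
  ereal_inf [set renyi a (prod_dist (margX P) Q) P | Q in [set Q : Y -> R | is_dist Q]].

End Info.

(* Main.v *)
Require Import Defs.
From HB Require Import structures.
From mathcomp Require Import all_boot all_order all_algebra.
From mathcomp Require Import all_classical all_reals all_analysis.
From mathcomp Require Import ring lra.
Import Order.TTheory GRing.Theory Num.Theory.
Local Open Scope classical_set_scope.
Local Open Scope ring_scope.
Import numFieldNormedType.Exports.

Section Aux.
Variable R : realType.

Implicit Types u v a : R.

Lemma amgm_lt1 u v a : 0 <= u -> 0 <= v -> 0 < a < 1 ->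
  u `^ a * v `^ (1 - a) <= a * u + (1 - a) * v.
Proof.
move=> u0 v0 /andP[a0 a1].
have b0 : 0 < 1 - a by rewrite subr_gt0.
have ia : 0 < a^-1 by rewrite invr_gt0.
have ib : 0 < (1 - a)^-1 by rewrite invr_gt0.
have := @conjugate_powR R (u `^ a) (v `^ (1 - a)) a^-1 (1 - a)^-1
  (powR_ge0 _ _) (powR_ge0 _ _) ia ib.
rewrite !invrK -!powRrM !mulfV ?gt_eqF// !powRr1//.
by rewrite addrC subrK => /(_ erefl); rewrite !(mulrC _ a) !(mulrC _ (1 - a)).
Qed.

Lemma amgm_gt1 u v a : 0 <= u -> 0 < v -> 1 < a ->
  a * u + (1 - a) * v <= u `^ a * v `^ (1 - a).
Proof.
move=> u0 v0 a1.
have a0 : 0 < a by apply: lt_trans a1.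
have b0 : 0 < a - 1 by rewrite subr_gt0.
set q := a / (a - 1).
have q0 : 0 < q by rewrite divr_gt0.
have pq : a^-1 + q^-1 = 1.
  rewrite /q invf_div; field.
  by rewrite gt_eqF.
have := @conjugate_powR R (u * v `^ ((1 - a) / a)) (v `^ ((a - 1) / a)) a q
  (mulr_ge0 u0 (powR_ge0 _ _)) (powR_ge0 _ _) a0 q0 pq.
rewrite -mulrA -powRD; last by apply/implyP => _; rewrite gt_eqF.
have -> : (1 - a) / a + (a - 1) / a = 0 by rewrite -mulrDl addrC addrA subrK subrr mul0r.
rewrite powRr0 mulr1.
rewrite powRM ?powR_ge0// -!powRrM.
have -> : (1 - a) / a * a = 1 - a by rewrite mulfVK ?gt_eqF.
have -> : (a - 1) / a * q = 1 by rewrite /q; field; rewrite !gt_eqF.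
rewrite (powRr1 (ltW v0)) => H.
have Hq : 1 / q = (a - 1) / a by rewrite /q mul1r invf_div.
rewrite mul1r in Hq.
rewrite Hq in H.
have : a * u <= u `^ a * v `^ (1 - a) + (a - 1) * v.
  rewrite -(@ler_pM2r _ a^-1) ?invr_gt0// mulrAC mulfV ?gt_eqF// mul1r.
  apply: (le_trans H); rewrite le_eqVlt; apply/orP; left; apply/eqP.
  by field; rewrite gt_eqF.
lra.
Qed.


Lemma der_term (a c : R) (x : R) :
  is_derive x 1 (fun t : R => a * expR (t * c)) (a * (c * expR (x * c))).
Proof.
have -> : (fun t : R => a * expR (t * c)) = a *: (expR \o (fun t => t * c)).
  by apply/funext => t.
apply: is_deriveZ.
rewrite mulrC; apply: is_derive1_comp.
have -> : (fun t : R => t * c) = c *: id by apply/funext => t /=; rewrite mulrC.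
rewrite -[c in is_derive _ _ _ c]mulr1.
exact: is_deriveZ.
Qed.

Lemma der_sum (I : eqType) (s : seq I) (F : I -> R -> R) (dF : I -> R) (x : R) :
  (forall i, is_derive x 1 (F i) (dF i)) ->
  is_derive x 1 (fun t => \sum_(i <- s) F i t) (\sum_(i <- s) dF i).
Proof.
move=> H; elim: s => [|i s IH].
  rewrite big_nil.
  have -> : (fun t : R => \sum_(i <- [::]) F i t) = cst 0.
    by apply/funext => t; rewrite big_nil.
  exact: is_derive_cst.
rewrite big_cons.
have -> : (fun t : R => \sum_(j <- i :: s) F j t) = F i + (fun t => \sum_(j <- s) F j t).
  by apply/funext => t; rewrite big_cons.
exact: is_deriveD.
Qed.

Lemma key_limit (T : finType) (q c : T -> R) : (forall t, 0 <= q t) -> \sum_t q t = 1 ->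
  (fun t : R => t^-1 * ln (\sum_i q i * expR (t * c i))) @ 0^' --> \sum_i q i * c i.
Proof.
move=> q0 q1.
set phi := fun t : R => \sum_i q i * expR (t * c i).
have Hp : is_derive (0:R) 1 phi (\sum_i q i * (c i * expR (0 * c i))).
  by apply: der_sum => i; exact: der_term.
have phi0 : phi 0 = 1.
  by rewrite /phi -q1; apply: eq_bigr => i _; rewrite mul0r expR0 mulr1.
have Hl : is_derive (0:R) 1 ((@ln R) \o phi) ((phi 0)^-1 * (\sum_i q i * (c i * expR (0 * c i)))).
  apply: is_derive1_comp; apply: is_derive1_ln; rewrite phi0; exact: ltr01.
have Hc := @ex_derive _ _ _ _ _ _ _ Hl.
have Hv := @derive_val _ _ _ _ _ _ _ Hl.
rewrite /derive in Hv.
have Hc2 := Hc; rewrite /derivable Hv in Hc2; move: Hc2.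
have E : (phi 0)^-1 * \sum_i q i * (c i * expR (0 * c i)) = \sum_i q i * c i.
  by rewrite phi0 invr1 mul1r; apply: eq_bigr => i _; rewrite mul0r expR0 mulr1.
rewrite E => H2; apply: (cvg_trans _ H2).
apply: near_eq_cvg; apply: nearW => h /=.
by rewrite phi0 ln1 subr0 addr0 /phi /GRing.scale /= mulr1.
Qed.


Lemma onem_dnbhs (T : topologicalType) (f : R -> T) (l : T) :
  f x @[x --> (0:R)^'] --> l -> f (1 - a) @[a --> (1:R)^'] --> l.
Proof.
move=> H A /H [e /= e0 HA]; exists e => // a /= Ha a1.
apply: HA; last by rewrite subr_eq0 eq_sym.
by rewrite /ball_ /= sub0r normrN.
Qed.

Lemma mul_pos_split (a b : R) : 0 <= a -> 0 <= b -> 0 < a * b -> 0 < a /\ 0 < b.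
Proof.
move=> a0 b0 ab; split; rewrite lt_def; apply/andP; split => //; apply/eqP => e;
  by move: ab; rewrite e ?mul0r ?mulr0 ltxx.
Qed.

Lemma exists_pos (T : finType) (f : T -> R) : 0 < \sum_t f t -> exists t, 0 < f t.
Proof.
move=> f1; case: (pselect (exists t, 0 < f t)) => // H; exfalso.
have : \sum_t f t <= \sum_(t : T) (0:R).
  apply: ler_sum => t _; rewrite leNgt; apply/negP => ft; apply: H; by exists t.
by rewrite big1_eq => H2; have := lt_le_trans f1 H2; rewrite ltxx.
Qed.

Lemma sum_bound_lt1 (I : finType) (A : pred I) (Q w : I -> R) a :
  0 < a < 1 -> (forall i, 0 <= Q i) -> (forall i, 0 <= w i) ->
  \sum_(i | A i) Q i = 1 -> 0 < \sum_(i | A i) w i ->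
  \sum_(i | A i) Q i `^ a * w i `^ (1 - a) <= (\sum_(i | A i) w i) `^ (1 - a).
Proof.
move=> /andP[a0 a1] Q0 w0 Q1; set Z := \sum_(i | A i) w i => Z0.
apply: (@le_trans _ _ (\sum_(i | A i) Z `^ (1-a) * (a * Q i + (1 - a) * (w i / Z)))).
  apply: ler_sum => i _.
  have -> : w i `^ (1-a) = (w i / Z) `^ (1-a) * Z `^ (1-a).
    by rewrite -powRM ?mulfVK ?gt_eqF ?divr_ge0 // ltW.
  rewrite mulrA mulrC; apply: ler_wpM2l; first exact: powR_ge0.
  by apply: amgm_lt1 => //; [apply: divr_ge0 => //; exact: ltW | apply/andP].
rewrite -mulr_sumr big_split /= -!mulr_sumr -mulr_suml Q1 -/Z mulfV ?gt_eqF //.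
by rewrite !mulr1 addrC subrK mulr1.
Qed.

Lemma sum_bound_gt1 (I : finType) (A : pred I) (Q w : I -> R) a :
  1 < a -> (forall i, 0 <= Q i) -> (forall i, A i -> 0 < w i) ->
  \sum_(i | A i) Q i = 1 -> 0 < \sum_(i | A i) w i ->
  (\sum_(i | A i) w i) `^ (1 - a) <= \sum_(i | A i) Q i `^ a * w i `^ (1 - a).
Proof.
move=> a1 Q0 w0 Q1; set Z := \sum_(i | A i) w i => Z0.
apply: (@le_trans _ _ (\sum_(i | A i) Z `^ (1-a) * (a * Q i + (1 - a) * (w i / Z)))); last first.
  apply: ler_sum => i Ai.
  have -> : w i `^ (1-a) = (w i / Z) `^ (1-a) * Z `^ (1-a).
    by rewrite -powRM ?mulfVK ?gt_eqF ?divr_ge0 ?w0 // ltW ?w0.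
  rewrite [X in _ <= X]mulrA [X in _ <= X]mulrC; apply: ler_wpM2l; first exact: powR_ge0.
  by apply: amgm_gt1 => //; apply: divr_gt0 => //; exact: w0.
rewrite -mulr_sumr big_split /= -!mulr_sumr -mulr_suml Q1 -/Z mulfV ?gt_eqF //.
by rewrite !mulr1 addrC subrK mulr1.
Qed.

Lemma sum_attain (I : finType) (A : pred I) (w : I -> R) a :
  a != 0 -> (forall i, 0 <= w i) -> 0 < \sum_(i | A i) w i ->
  \sum_i (if A i then w i / (\sum_(j | A j) w j) else 0) `^ a * w i `^ (1 - a)
  = (\sum_(i | A i) w i) `^ (1 - a).
Proof.
move=> a0 w0; set Z := \sum_(i | A i) w i => Z0.
rewrite (bigID A) /= [X in _ + X]big1 ?addr0; last first.
  by move=> i /negbTE ->; rewrite powR0 // mul0r.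
transitivity (\sum_(i | A i) w i / Z * Z `^ (1 - a)); last first.
  by rewrite -mulr_suml -mulr_suml -/Z mulfV ?gt_eqF // mul1r.
apply: eq_bigr => i ->.
have [wi0|wipos] := eqVneq (w i) 0.
  by rewrite wi0 !mul0r (powR0 a0) mul0r.
have wip : 0 < w i by rewrite lt_def wipos w0.
have -> : w i `^ (1-a) = (w i / Z) `^ (1-a) * Z `^ (1-a).
  by rewrite -powRM ?mulfVK ?gt_eqF ?divr_ge0 // ltW.
rewrite mulrA -powRD; last by apply/implyP => _; rewrite gt_eqF // divr_gt0.
by rewrite addrC subrK powRr1 // divr_ge0 // ltW.
Qed.

Lemma nonneg_eq0 (a : R) : 0 <= a -> ~~ (0 < a) -> a = 0.
Proof. by move=> a0 na; apply/eqP; rewrite eq_le a0 andbT leNgt. Qed.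

Lemma inf_char (T : Type) (D : set T) (F : T -> \bar R) (v : \bar R) :
  (forall Q, D Q -> (v <= F Q)%E) -> (exists2 Q, D Q & F Q = v) ->
  ereal_inf [set F Q | Q in D] = v.
Proof.
move=> lb [Q DQ FQ]; apply/eqP; rewrite eq_le; apply/andP; split.
  by apply: ge_ereal_inf; exists v => //; exists Q.
by apply: le_ereal_inf_tmp => _ [Q' DQ' <-]; exact: lb.
Qed.

Lemma inf_top (T : Type) (D : set T) (F : T -> \bar R) :
  (forall Q, D Q -> F Q = +oo%E) -> ereal_inf [set F Q | Q in D] = +oo%E.
Proof.
by move=> H; apply/ereal_inf_pinfty => _ [Q DQ <-]; rewrite H.
Qed.

Lemma cvg_finsum (T : Type) (F : set_system T) (FF : Filter F) (I : eqType) (s : seq I) (A : pred I)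
  (f : I -> T -> R) (l : I -> R) :
  (forall i, A i -> f i x @[x --> F] --> l i) ->
  (\sum_(i <- s | A i) f i x) @[x --> F] --> \sum_(i <- s | A i) l i.
Proof.
move=> H; elim: s => [|i s IH].
  rewrite big_nil; under eq_fun do rewrite big_nil; exact: cvg_cst.
rewrite big_cons; under eq_fun do rewrite big_cons.
case: (boolP (A i)) => Ai //.
exact: cvgD (H i Ai) IH.
Qed.


Lemma near0_onem_left (Pr : R -> Prop) :
  (\forall t \near (0:R), Pr t) -> \forall a \near (1:R)^'-, Pr (1 - a).
Proof.
move=> [e /= e0 H]; exists e => // a /= Ha alt; apply: H.
by rewrite /ball_ /= sub0r normrN.
Qed.

Lemma expR_lim0 (k : R) : k < 0 -> expR ((1 - a)^-1 * k) @[a --> (1:R)^'-] --> 0.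
Proof.
move=> k0; apply/cvgrPdist_lt => e e0.
set M := Num.min (ln e) (-1).
have M0 : M < 0 by rewrite /M gt_min ltrN10 orbT.
have Mle : M <= ln e by rewrite /M ge_min lexx.
set d := k / M.
have Md : M * d = k by rewrite /d mulrC mulfVK // ltr0_neq0.
have d0 : 0 < d by rewrite /d -[k]opprK -[M]opprK invrN mulrNN divr_gt0 // oppr_gt0.
near=> a.
have a1 : a < 1 by near: a; exact: nbhs_left_lt.
have ad : 1 - d < a by near: a; apply: nbhs_left_gt; rewrite ltrBlDr ltrDl.
rewrite sub0r normrN ger0_norm ?expR_ge0 // -[e in _ < e]lnK ?posrE // ltr_expR.
apply: (lt_le_trans _ Mle); rewrite mulrC ltr_pdivrMr ?subr_gt0 //.
nra.
Unshelve. all: by end_near.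
Qed.


Lemma cvg_to_0right (T : Type) (F : set_system T) (FF : Filter F) (u : T -> R) :
  u @ F --> 0 -> (\forall x \near F, 0 < u x) -> u @ F --> (0:R)^'+.
Proof.
move=> H pos A [e /= e0 HA].
have Hn := (cvgrPdist_lt _ _).1 H e e0.
near=> x; apply: HA; last by near: x; exact: pos.
by rewrite /ball_ /=; near: x; exact: Hn.
Unshelve. all: by end_near.
Qed.

Lemma mln_to_y (T : Type) (F : set_system T) (FF : Filter F) (u : T -> R) :
  u @ F --> 0 -> (\forall x \near F, 0 < u x) -> ((- ln (u x))%:E @[x --> F] --> +oo)%E.
Proof.
move=> H pos; apply/cvgeryP.
have L := cvg_comp _ _ (@cvg_to_0right T F FF u H pos) (@lnNy R).
apply/cvgryPge => A; have := (cvgrNyPle _).1 L (- A).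
move=> /(_ FF); apply: filterS => x /=; rewrite lerNr; exact.
Qed.

Lemma mln_to (T : Type) (F : set_system T) (FF : Filter F) (u : T -> R) (l : R) :
  0 < l -> u @ F --> l -> ((- ln (u x))%:E @[x --> F] --> (- ln l)%:E)%E.
Proof.
move=> l0 H; apply: cvg_EFin; first exact: nearW.
apply: cvgN; apply: continuous_cvg => //; exact: continuous_ln.
Qed.

End Aux.

Section Main.
Variables (R : realType) (X Y : finType) (P : X * Y -> R).
Hypothesis HP : is_dist P.

Local Notation p := (margX P).

Lemma P0 t : 0 <= P t. Proof. by case: HP. Qed.
Lemma p0 x : 0 <= p x.
Proof. by rewrite /margX; apply: sumr_ge0 => y _; exact: P0. Qed.
Lemma psum : \sum_x p x = 1.
Proof.
case: HP => _ <-; rewrite /margX pair_big /=.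
by apply: eq_bigr => -[x y] _.
Qed.
Lemma Pxy_le x y : P (x, y) <= p x.
Proof.
rewrite /margX (bigD1 y) //= lerDl; apply: sumr_ge0 => *; exact: P0.
Qed.
Lemma Ppos_p x y : 0 < P (x, y) -> 0 < p x.
Proof. by move=> H; apply: lt_le_trans H (Pxy_le x y). Qed.

Definition inG y := [forall x, (0 < p x) ==> (0 < P (x, y))].
Definition hh (a : R) y := \sum_x p x `^ a * P (x, y) `^ (1 - a).
Definition ww (a : R) y := hh a y `^ (1 - a)^-1.
Definition Zm a := \sum_y ww a y.
Definition Zp a := \sum_(y | inG y) ww a y.
Definition gg y := \sum_x p x * ln (P (x, y) / p x).
Definition ZZ := \sum_(y | inG y) expR (gg y).

Lemma inGP y : reflect (forall x, 0 < p x -> 0 < P (x, y)) (inG y).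
Proof.
apply: (iffP forallP) => H x; first by move=> px; have /implyP := H x; apply.
by apply/implyP; exact: H.
Qed.

Lemma hh_ge0 a y : 0 <= hh a y.
Proof. by apply: sumr_ge0 => x _; apply: mulr_ge0; exact: powR_ge0. Qed.
Lemma ww_ge0 a y : 0 <= ww a y.
Proof. exact: powR_ge0. Qed.

Lemma hh_ww a y : a != 1 -> hh a y = ww a y `^ (1 - a).
Proof.
move=> a1; rewrite /ww -powRrM mulVf ?powRr1 ?hh_ge0 //.
by rewrite subr_eq0 eq_sym.
Qed.

Lemma RS (Q : Y -> R) a : (forall y, 0 <= Q y) -> 0 < a ->
  renyi_sum a (prod_dist p Q) P = \sum_y Q y `^ a * hh a y.
Proof.
move=> Q0 a0; rewrite /renyi_sum big_mkcond /=.
transitivity (\sum_t (prod_dist p Q t) `^ a * P t `^ (1 - a)).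
  apply: eq_bigr => t _; case: ifPn => // H.
  have E : prod_dist p Q t = 0.
    by apply: nonneg_eq0 => //; apply: mulr_ge0; [exact: p0 | exact: Q0].
  by rewrite E powR0 ?mul0r // gt_eqF.
have -> : \sum_t (prod_dist p Q t) `^ a * P t `^ (1 - a) =
   \sum_x \sum_y (prod_dist p Q (x, y)) `^ a * P (x, y) `^ (1 - a).
  by rewrite pair_big /=; apply: eq_bigr => -[x y] _.
rewrite exchange_big /=; apply: eq_bigr => y _; rewrite /hh mulr_sumr.
apply: eq_bigr => x _; rewrite /prod_dist /= powRM ?p0 ?Q0 //.
by rewrite (mulrC (p x `^ a)) -mulrA.
Qed.


Lemma exists_px : exists x, 0 < p x.
Proof. by apply: exists_pos; rewrite psum ltr01. Qed.

Lemma hh_pos a y x : 0 < p x -> 0 < P (x, y) -> 0 < hh a y.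
Proof.
move=> px Pxy; apply: (@lt_le_trans _ _ (p x `^ a * P (x, y) `^ (1 - a))).
  by apply: mulr_gt0; exact: powR_gt0.
rewrite /hh (bigD1 x) //= lerDl; apply: sumr_ge0 => *; apply: mulr_ge0; exact: powR_ge0.
Qed.

Lemma hh_posG a y : inG y -> 0 < hh a y.
Proof.
move=> /inGP G; have [x px] := exists_px; exact: (@hh_pos a y x px (G x px)).
Qed.

Lemma Zm_pos a : 0 < Zm a.
Proof.
have [x px] := exists_px.
have [y Pxy] : exists y, 0 < P (x, y) by apply: exists_pos.
have wy : 0 < ww a y by apply: powR_gt0; exact: (@hh_pos a y x px Pxy).
apply: (lt_le_trans wy); rewrite /Zm (bigD1 y) //= lerDl.
apply: sumr_ge0 => *; exact: ww_ge0.
Qed.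

Lemma renyi_lt1 a : 0 < a < 1 -> renyi_umlaut a P = (- ln (Zm a))%:E.
Proof.
move=> /andP[a0 a1].
have a1' : a != 1 by rewrite lt_eqF.
have nlt : (1 < a) = false by rewrite ltNge ltW.
have am1 : a - 1 < 0 by rewrite subr_lt0.
apply: inf_char.
  move=> Q [Q0 Q1]; rewrite /renyi nlt /= RS //.
  case: eqP => [_|Sne]; first exact: leey.
  rewrite lee_fin.
  have Sle : \sum_y Q y `^ a * hh a y <= Zm a `^ (1 - a).
    under eq_bigr do rewrite hh_ww //.
    apply: sum_bound_lt1 => //; [by apply/andP | exact: ww_ge0 | exact: Zm_pos].
  have S0 : 0 < \sum_y Q y `^ a * hh a y.
    rewrite lt_def; apply/andP; split; first exact/eqP.
    by apply: sumr_ge0 => y _; apply: mulr_ge0; [exact: powR_ge0 | exact: hh_ge0].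
  rewrite ler_ndivlMr //.
  have : ln (\sum_y Q y `^ a * hh a y) <= ln (Zm a `^ (1 - a)).
    by rewrite ler_ln ?posrE // powR_gt0 // Zm_pos.
  rewrite ln_powR => H; apply: (le_trans H); rewrite le_eqVlt; apply/orP; left.
  by apply/eqP; ring.
exists (fun y => ww a y / Zm a).
  split; first by move=> y; apply: divr_ge0; [exact: ww_ge0 | exact: ltW (Zm_pos a)].
  by rewrite -mulr_suml mulfV // gt_eqF // Zm_pos.
rewrite /renyi nlt /= RS //; last first.
  by move=> y; apply: divr_ge0; [exact: ww_ge0 | exact: ltW (Zm_pos a)].
under eq_bigr do rewrite hh_ww //.
have := @sum_attain R Y xpredT (ww a) a (lt0r_neq0 a0) (@ww_ge0 a) (Zm_pos a).
rewrite /= -/(Zm a) => ->.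
rewrite powR_eq0 gt_eqF ?Zm_pos //= ln_powR; congr EFin; field.
by rewrite subr_eq0.
Qed.


Lemma abs_contP (Q : Y -> R) : (forall y, 0 <= Q y) ->
  abs_cont (prod_dist p Q) P <-> (forall y, 0 < Q y -> inG y).
Proof.
move=> Q0; split.
  move=> ac y Qy; apply/inGP => x px; apply: (ac (x, y)).
  by rewrite /prod_dist /= mulr_gt0.
move=> H [x y] /=; rewrite /prod_dist /= => /mul_pos_split.
move=> /(_ (p0 x) (Q0 y)) [px Qy]; by move/inGP: (H y Qy); apply.
Qed.

Lemma Zp_pos a : (exists y, inG y) -> 0 < Zp a.
Proof.
move=> [y Gy]; have wy : 0 < ww a y by apply: powR_gt0; exact: hh_posG.
apply: (lt_le_trans wy); rewrite /Zp (bigD1 y) //= lerDl.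
apply: sumr_ge0 => *; exact: ww_ge0.
Qed.

Lemma sumG (Q : Y -> R) (F : Y -> R) : (forall y, 0 < Q y -> inG y) -> (forall y, 0 <= Q y) ->
  (forall y, Q y = 0 -> F y = 0) -> \sum_y F y = \sum_(y | inG y) F y.
Proof.
move=> H Q0 F0; rewrite (bigID inG) /= [X in _ + X]big1 ?addr0 // => y nG.
apply: F0; apply: nonneg_eq0 => //; apply/negP => Qy; by move: nG; rewrite H.
Qed.

Lemma renyi_gt1 a : 1 < a -> (exists y, inG y) -> renyi_umlaut a P = (- ln (Zp a))%:E.
Proof.
move=> a1 exG.
have a0 : 0 < a by apply: lt_trans a1.
have a1' : a != 1 by rewrite gt_eqF.
have am1 : 0 < a - 1 by rewrite subr_gt0.
apply: inf_char.
  move=> Q [Q0 Q1]; rewrite /renyi; case: asboolP => ac; last first.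
    by rewrite a1 /=; exact: leey.
  rewrite a1 /= RS //.
  have HG := (abs_contP Q Q0).1 ac.
  have S1 : \sum_y Q y `^ a * hh a y = \sum_(y | inG y) Q y `^ a * ww a y `^ (1 - a).
    rewrite (sumG _ _ HG Q0); last by move=> y ->; rewrite powR0 ?mul0r // lt0r_neq0.
    by apply: eq_bigr => y _; rewrite hh_ww.
  have QG : \sum_(y | inG y) Q y = 1 by rewrite -(sumG _ _ HG Q0).
  have Sle : Zp a `^ (1 - a) <= \sum_y Q y `^ a * hh a y.
    rewrite S1; apply: sum_bound_gt1 => //.
      by move=> y Gy; apply: powR_gt0; exact: hh_posG.
    exact: Zp_pos.
  have S0 : 0 < \sum_y Q y `^ a * hh a y.
    by apply: lt_le_trans Sle; apply: powR_gt0; exact: Zp_pos.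
  rewrite gt_eqF // lee_fin ler_pdivlMr //.
  have : ln (Zp a `^ (1 - a)) <= ln (\sum_y Q y `^ a * hh a y).
    by rewrite ler_ln ?posrE // powR_gt0 // Zp_pos.
  rewrite ln_powR => H; apply: le_trans H; rewrite le_eqVlt; apply/orP; left.
  by apply/eqP; ring.
have Zp0 := Zp_pos a exG.
set Qs := fun y => if inG y then ww a y / Zp a else 0.
have Qs0 : forall y, 0 <= Qs y.
  by move=> y; rewrite /Qs; case: ifP => // _; apply: divr_ge0; [exact: ww_ge0 | exact: ltW].
exists Qs.
  split => //; rewrite /Qs -big_mkcond /= -mulr_suml mulfV //.
  exact: lt0r_neq0.
have ac : abs_cont (prod_dist p Qs) P.
  apply/(abs_contP Qs Qs0) => y; rewrite /Qs; case: ifP => // _; by rewrite ltxx.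
rewrite /renyi asboolT // andbF /= RS //.
under eq_bigr do rewrite hh_ww //.
have := @sum_attain R Y inG (ww a) a (lt0r_neq0 a0) (@ww_ge0 a) Zp0.
rewrite -/(Zp a) => ->.
rewrite powR_eq0 gt_eqF //= ln_powR; congr EFin; field.
by rewrite subr_eq0.
Qed.

Lemma renyi_gt1_noG a : 1 < a -> ~ (exists y, inG y) -> renyi_umlaut a P = +oo%E.
Proof.
move=> a1 nG; apply: inf_top => Q [Q0 Q1]; rewrite /renyi a1 /=.
case: asboolP => // ac; exfalso.
have [y Qy] : exists y, 0 < Q y by apply: exists_pos; rewrite Q1 ltr01.
by apply: nG; exists y; exact: ((abs_contP Q Q0).1 ac y Qy).
Qed.


Lemma KL_val (Q : Y -> R) : is_dist Q -> abs_cont (prod_dist p Q) P ->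
  KL (prod_dist p Q) P = (\sum_y Q y * (ln (Q y) - gg y))%:E.
Proof.
move=> [Q0 Q1] ac; rewrite /KL asboolT //; congr EFin.
rewrite big_mkcond /=.
transitivity (\sum_t prod_dist p Q t * ln (prod_dist p Q t / P t)).
  apply: eq_bigr => t _; case: ifPn => // H.
  by rewrite (@nonneg_eq0 R _ _ H) ?mul0r //; apply: mulr_ge0; [exact: p0|exact: Q0].
have -> : \sum_t prod_dist p Q t * ln (prod_dist p Q t / P t) =
   \sum_x \sum_y prod_dist p Q (x, y) * ln (prod_dist p Q (x, y) / P (x, y)).
  by rewrite pair_big /=; apply: eq_bigr => -[x y] _.
rewrite exchange_big /=; apply: eq_bigr => y _.
have [Qy0|Qyne] := eqVneq (Q y) 0.
  by rewrite Qy0 mul0r big1 // => x _; rewrite /prod_dist /= Qy0 mulr0 mul0r.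
have Qy : 0 < Q y by rewrite lt_def Qyne Q0.
have Gy : inG y := (abs_contP Q Q0).1 ac y Qy.
have -> : ln (Q y) - gg y = \sum_x p x * (ln (Q y) - ln (P (x, y) / p x)).
  rewrite /gg -[ln (Q y) in LHS]mul1r -psum mulr_suml -sumrB.
  by apply: eq_bigr => x _; rewrite mulrBr.
rewrite mulr_sumr; apply: eq_bigr => x _; rewrite /prod_dist /=.
have [px0|pxne] := eqVneq (p x) 0; first by rewrite px0 !mul0r mulr0.
have px : 0 < p x by rewrite lt_def pxne p0.
have Pxy : 0 < P (x, y) by move/inGP: Gy; apply.
rewrite -ln_div ?posrE ?divr_gt0 //.
have -> : Q y / (P (x, y) / p x) = p x * Q y / P (x, y).
  by field; apply/andP; split; rewrite gt_eqF.
by ring.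
Qed.

Lemma ZZ_pos : (exists y, inG y) -> 0 < ZZ.
Proof.
move=> [y Gy]; apply: (@lt_le_trans _ _ (expR (gg y))); first exact: expR_gt0.
rewrite /ZZ (bigD1 y) //= lerDl; apply: sumr_ge0 => *; exact: expR_ge0.
Qed.

Lemma umlaut_G : (exists y, inG y) -> umlaut P = (- ln ZZ)%:E.
Proof.
move=> exG; have Z0 := ZZ_pos exG.
apply: inf_char.
  move=> Q [Q0 Q1]; case: (pselect (abs_cont (prod_dist p Q) P)) => ac; last first.
    by rewrite /KL asboolF // leey.
  rewrite KL_val // lee_fin.
  apply: (@le_trans _ _ (\sum_y (Q y - (if inG y then expR (gg y) / ZZ else 0) - Q y * ln ZZ))).
    rewrite !sumrB -mulr_suml Q1 -big_mkcond /= -mulr_suml mulfV ?gt_eqF //.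
    by rewrite subrr sub0r mul1r.
  apply: ler_sum => y _.
  have [Qy0|Qyne] := eqVneq (Q y) 0.
    rewrite Qy0 !mul0r subr0 sub0r oppr_le0; case: ifP => // _.
    by apply: divr_ge0; [exact: expR_ge0 | exact: ltW].
  have Qy : 0 < Q y by rewrite lt_def Qyne Q0.
  have Gy : inG y := (abs_contP Q Q0).1 ac y Qy.
  rewrite Gy.
  set u := expR (gg y) / (ZZ * Q y).
  have u0 : 0 < u by rewrite divr_gt0 ?expR_gt0 ?mulr_gt0.
  have lnu : ln u = gg y - ln ZZ - ln (Q y).
    by rewrite ln_div ?posrE ?mulr_gt0 ?expR_gt0 // lnM ?posrE // expRK opprD addrA.
  have H1 : -1 < u - 1 by lra.
  have H : ln u <= u - 1.
    have := @le_ln1Dx R (u - 1) H1.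
    by have -> : 1 + (u - 1) = u by ring.
  rewrite lnu in H.
  have Hu : Q y * u = expR (gg y) / ZZ.
    by rewrite /u; field; apply/andP; split; rewrite gt_eqF.
  have H2 := ler_wpM2l (ltW Qy) H.
  rewrite -Hu -subr_ge0.
  have -> : Q y * (ln (Q y) - gg y) - (Q y - Q y * u - Q y * ln ZZ) =
    Q y * (u - 1) - Q y * (gg y - ln ZZ - ln (Q y)) by ring.
  by rewrite subr_ge0.
set Qs := fun y => if inG y then expR (gg y) / ZZ else 0.
have Qs0 : forall y, 0 <= Qs y.
  by move=> y; rewrite /Qs; case: ifP => // _; apply: divr_ge0; [exact: expR_ge0 | exact: ltW].
have dQs : is_dist Qs.
  split => //; rewrite /Qs -big_mkcond /= -mulr_suml mulfV //.
  exact: lt0r_neq0.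
exists Qs => //.
have ac : abs_cont (prod_dist p Qs) P.
  apply/(abs_contP Qs Qs0) => y; rewrite /Qs; case: ifP => // _; by rewrite ltxx.
rewrite KL_val //; congr EFin.
transitivity (\sum_y Qs y * (- ln ZZ)); last first.
  by rewrite -mulr_suml; case: dQs => _ ->; rewrite mul1r.
apply: eq_bigr => y _; rewrite /Qs; case: ifP => // _; last by rewrite !mul0r.
by rewrite ln_div ?posrE ?expR_gt0 // expRK; congr (_ * _); ring.
Qed.

Lemma umlaut_noG : ~ (exists y, inG y) -> umlaut P = +oo%E.
Proof.
move=> nG; apply: inf_top => Q [Q0 Q1]; rewrite /KL.
case: asboolP => // ac; exfalso.
have [y Qy] : exists y, 0 < Q y by apply: exists_pos; rewrite Q1 ltr01.
by apply: nG; exists y; exact: ((abs_contP Q Q0).1 ac y Qy).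
Qed.


Lemma hh_exp a y : a != 0 -> a != 1 ->
  hh a y = \sum_x (if 0 < P (x, y) then p x else 0) * expR ((1 - a) * ln (P (x, y) / p x)).
Proof.
move=> a0 a1; apply: eq_bigr => x _.
have [px0|pxne] := eqVneq (p x) 0.
  by rewrite px0 (powR0 a0) !mul0r; case: ifP => _; rewrite mul0r.
have px : 0 < p x by rewrite lt_def pxne p0.
case: (boolP (0 < P (x, y))) => Pxy; last first.
  rewrite (@nonneg_eq0 R _ (P0 _) Pxy) mul0r powR0 ?mulr0 //.
  by rewrite subr_eq0 eq_sym.
rewrite /powR !gt_eqF // -expRD ln_div ?posrE //.
rewrite -[X in _ = X * _](@lnK R (p x)) ?posrE // -expRD; congr expR; ring.
Qed.

Lemma qG y x : inG y -> (if 0 < P (x, y) then p x else 0) = p x.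
Proof.
move=> /inGP G; case: ifPn => // nP; apply/esym; apply: nonneg_eq0; first exact: p0.
by apply/negP => px; move: nP; rewrite G.
Qed.


Lemma lim_G y : inG y -> ww a y @[a --> (1:R)^'] --> expR (gg y).
Proof.
move=> Gy.
have K := @key_limit R X p (fun x => ln (P (x, y) / p x)) p0 psum.
have K1 := @onem_dnbhs R _ _ _ K.

have K2 := continuous_cvg _ (@continuous_expR R _) K1.
rewrite /gg; apply: cvg_trans; last exact: K2.
apply: near_eq_cvg; near=> a.
have a0 : 0 < a by near: a; apply: nbhs_dnbhs; exact: lt_nbhsr ltr01.
have a1 : a != 1 by near: a; exact: nbhs_dnbhs_neq.
rewrite /= /ww /powR gt_eqF ?hh_posG // hh_exp ?lt0r_neq0 //.
by under [in RHS]eq_bigr do rewrite qG //.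
Unshelve. all: by end_near.
Qed.


Lemma lim_nG y : ~~ inG y -> ww a y @[a --> (1:R)^'-] --> 0.
Proof.
move=> nG.
have [x0 [px0 nP0]] : exists x, 0 < p x /\ ~~ (0 < P (x, y)).
  apply: contrapT => H; apply: (negP nG); apply/inGP => x px.
  case: (boolP (0 < P (x, y))) => // nP; exfalso; apply: H; by exists x.
set q := fun x => if 0 < P (x, y) then p x else 0.
set c := fun x => ln (P (x, y) / p x).
set phi := fun t : R => \sum_x q x * expR (t * c x).
have q0 : forall x, 0 <= q x by move=> x; rewrite /q; case: ifP => // _; exact: p0.
have qle : forall x, q x <= p x by move=> x; rewrite /q; case: ifP => // _; exact: p0.
have phi0 : phi 0 = \sum_x q x by apply: eq_bigr => x _; rewrite mul0r expR0 mulr1.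
have phi0_ge : 0 <= phi 0 by rewrite phi0; apply: sumr_ge0 => x _; exact: q0.
have phi0_lt : phi 0 < 1.
  rewrite phi0 -psum (bigD1 x0) //= [X in _ < X](bigD1 x0) //= {1}/q (negbTE nP0) add0r.
  have := @ler_sum R _ (index_enum X) (fun x => x != x0) q (margX P) (fun x _ => qle x).
  move=> H; lra.
set c1 := (phi 0 + 1) / 2.
have c1lt : c1 < 1 by rewrite /c1; lra.
have phic1 : phi 0 < c1 by rewrite /c1; lra.
have c1pos : 0 < c1 by rewrite /c1; lra.
have D : is_derive (0:R) 1 phi (\sum_x q x * (c x * expR (0 * c x))).
  by apply: der_sum => x; exact: der_term.
have dif : differentiable phi 0 by apply/derivable1_diffP; exact: (@ex_derive _ _ _ _ _ _ _ D).
have cont := differentiable_continuous dif.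
have nearc : \forall t \near (0:R), phi t < c1.
  by apply: (cvgr_lt (f:=phi) _ cont).
have nearc1 := @near0_onem_left R _ nearc.
apply: (@squeeze_cvgr _ _ _ _ (fun=> 0) (fun a => expR ((1 - a)^-1 * ln c1))); last 2 first.
- exact: cvg_cst.
- by apply: expR_lim0; rewrite ln_lt0 // c1pos c1lt.
near=> a.
have a0 : 0 < a by near: a; apply: nbhs_left_gt; exact: ltr01.
have a1 : a < 1 by near: a; exact: nbhs_left_lt.
have hph : phi (1 - a) < c1 by near: a; exact: nearc1.
apply/andP; split; first exact: ww_ge0.
have -> : ww a y = phi (1 - a) `^ (1 - a)^-1.
  by rewrite /ww hh_exp ?lt0r_neq0 ?lt_eqF.
apply: (le_trans (ge0_ler_powR _ _ _ (ltW hph))).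
- by rewrite invr_ge0 subr_ge0 ltW.
- rewrite nnegrE; apply: sumr_ge0 => x _; apply: mulr_ge0 => //; exact: expR_ge0.
- by rewrite nnegrE ltW.
by rewrite /powR gt_eqF.
Unshelve. all: by end_near.
Qed.

End Main.
Theorem mainTheorem11 (R : realType) (X Y : finType) (P : X * Y -> R) :
  is_dist P ->
  (renyi_umlaut a P @[a --> (1 : R)^'-] --> umlaut P) /\
  (renyi_umlaut a P @[a --> (1 : R)^'+] --> umlaut P).
Proof.
move=> HP.
have ZmL : @Zm R X Y P a @[a --> (1:R)^'-] --> @ZZ R X Y P.
  rewrite /ZZ big_mkcond /=; apply: cvg_finsum => y _.
  case: ifP => Gy.
    by apply: cvg_dnbhs_at_left; exact: lim_G.
  exact: (lim_nG _ _ _ _ HP _ (negbT Gy)).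
have ZpR : @Zp R X Y P a @[a --> (1:R)^'+] --> @ZZ R X Y P.
  by apply: cvg_finsum => y Gy; apply: cvg_dnbhs_at_right; exact: lim_G.
case: (pselect (exists y, @inG R X Y P y)) => exG.
  have Z0 := ZZ_pos _ _ _ _ exG.
  rewrite (umlaut_G _ _ _ _ HP exG); split.
    have M := @mln_to R _ _ _ (@Zm R X Y P) (@ZZ R X Y P) Z0 ZmL.
    apply: cvg_trans; last exact: M.
    apply: near_eq_cvg; near=> a.
    have a0 : 0 < a by near: a; apply: nbhs_left_gt; exact: ltr01.
    have a1 : a < 1 by near: a; exact: nbhs_left_lt.
    by rewrite /= renyi_lt1 // a0 a1.
  have M := @mln_to R _ _ _ (@Zp R X Y P) (@ZZ R X Y P) Z0 ZpR.
  apply: cvg_trans; last exact: M.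
  apply: near_eq_cvg; near=> a.
  have a1 : 1 < a by near: a; exact: nbhs_right_gt.
  by rewrite /= renyi_gt1.
have ZZ0 : @ZZ R X Y P = 0.
  by rewrite /ZZ big_pred0 // => y; apply/negP => Gy; apply: exG; exists y.
rewrite (umlaut_noG _ _ _ _ HP exG); split.
  rewrite ZZ0 in ZmL.
  have M := @mln_to_y R _ _ _ (@Zm R X Y P) ZmL (nearW _ (Zm_pos _ _ _ _ HP)).
  apply: cvg_trans; last exact: M.
  apply: near_eq_cvg; near=> a.
  have a0 : 0 < a by near: a; apply: nbhs_left_gt; exact: ltr01.
  have a1 : a < 1 by near: a; exact: nbhs_left_lt.
  by rewrite /= renyi_lt1 // a0 a1.
apply: cvg_near_cst; near=> a.
have a1 : 1 < a by near: a; exact: nbhs_right_gt.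
by rewrite /= renyi_gt1_noG.
Unshelve. all: by end_near.
Qed.
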